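(* For every strongly normalisable $\lambda\mu$-term $M$ (i.e. $M\in\mathrm{SN}$) there exist a restricted basis $\Gamma$, a restricted name context $\Delta$ and a restricted term type $\delta$ such that $\Gamma \vdash_{R} M : \delta \mid \Delta$ is derivable in the restricted intersection type system.
   Context: Terms of Parigot's untyped $\lambda\mu$-calculus: $M ::= x \mid \lambda x.M \mid MN \mid \mu\alpha.C$, commands $C ::= [\alpha]M$, with reduction the compatible closure of $(\lambda x.M)N \to M[N/x]$ and $(\mu\alpha.C)N \to \mu\alpha.C[\alpha \Leftarrow N]$ (structural substitution: every subcommand $[\alpha]P$ becomes $[\alpha]P'N$); the renaming rule $[\alpha]\mu\beta.C\to C[\alpha/\beta]$ is ignored here, which does not change the set of strongly normalisable terms. $\mathrm{SN}$ is the set of terms admitting no infinite reduction sequence. Restricted types: with a single type constant $\varphi$, term types $\delta ::= \kappa\to\varphi \mid \delta\wedge\delta$ and continuation types $\kappa ::= \omega \mid \delta\times\kappa \mid \kappa\wedge\kappa$, pre-ordered by the least intersection type theory ($\wedge$ is the meet) with $\kappa\le\omega$, $(\delta_1\times\kappa_1)\wedge(\delta_2\times\kappa_2)\le(\delta_1\wedge\delta_2)\times(\kappa_1\wedge\kappa_2)$, $\times$ covariant in both arguments, and $\kappa_1\to\varphi\le\kappa_2\to\varphi$ whenever $\kappa_2\le\kappa_1$. A restricted basis $\Gamma$ maps finitely many term variables to restricted term types; a restricted name context $\Delta$ maps finitely many names to restricted continuation types ($\Delta(\alpha)=\omega$ if $\alpha$ is not declared). $\Gamma\vdash_R T:\sigma\mid\Delta$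 means derivable, with all judgements restricted and without the rule assigning $\omega$ to arbitrary terms, using the rules: (Ax) $\Gamma,x{:}\delta\vdash x:\delta\mid\Delta$; (Abs) from $\Gamma,x{:}\delta\vdash M:\kappa\to\varphi\mid\Delta$ infer $\Gamma\vdash\lambda x.M:\delta\times\kappa\to\varphi\mid\Delta$; (App) from $\Gamma\vdash M:\delta\times\kappa\to\varphi\mid\Delta$ and $\Gamma\vdash N:\delta\mid\Delta$ infer $\Gamma\vdash MN:\kappa\to\varphi\mid\Delta$; (Cmd) from $\Gamma\vdash M:\delta\mid\Delta$ infer $\Gamma\vdash[\alpha]M:\delta\times\Delta(\alpha)\mid\Delta$; ($\mu$) from $\Gamma\vdash C:(\kappa'\to\varphi)\times\kappa'\mid\alpha{:}\kappa,\Delta$ infer $\Gamma\vdash\mu\alpha.C:\kappa\to\varphi\mid\Delta$; plus intersection introduction ($\wedge$) and subsumption ($\le$). *)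

(* Defs.v *)
(* Untyped lambda-mu calculus with de Bruijn indices
   (two separate index spaces: term variables and names), and the
   restricted strict intersection type system |-_R. *)
From Stdlib Require Import Arith.

(* Var n : term variable (de Bruijn index among lambda binders)
   Lam M : \x.M    App M N : M N    Mu C : mu alpha.C (binds name 0 in C)
   Named a M : [a]M  (a is a de Bruijn index among mu binders) *)
Inductive term : Type :=
| Var : nat -> term
| Lam : term -> term
| App : term -> term -> term
| Mu  : cmd -> term
with cmd : Type :=
| Named : nat -> term -> cmd.

Fixpoint lift_t (c : nat) (M : term) : term :=
  match M with
  | Var n => if c <=? n then Var (S n) else Var n
  | Lam M' => Lam (lift_t (S c) M')
  | App M1 M2 => App (lift_t c M1) (lift_t c M2)
  | Mu C => Mu (lift_tc c C)
  end
with lift_tc (c : nat) (C : cmd) : cmd :=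
  match C with
  | Named a M' => Named a (lift_t c M')
  end.

Fixpoint lift_n (c : nat) (M : term) : term :=
  match M with
  | Var n => Var n
  | Lam M' => Lam (lift_n c M')
  | App M1 M2 => App (lift_n c M1) (lift_n c M2)
  | Mu C => Mu (lift_nc (S c) C)
  end
with lift_nc (c : nat) (C : cmd) : cmd :=
  match C with
  | Named a M' => Named (if c <=? a then S a else a) (lift_n c M')
  end.

Fixpoint subst_t (j : nat) (N : term) (M : term) : term :=
  match M with
  | Var n => if n =? j then N else if j <? n then Var (pred n) else Var n
  | Lam M' => Lam (subst_t (S j) (lift_t 0 N) M')
  | App M1 M2 => App (subst_t j N M1) (subst_t j N M2)
  | Mu C => Mu (subst_c j (lift_n 0 N) C)
  end
with subst_c (j : nat) (N : term) (C : cmd) : cmd :=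
  match C with
  | Named a M' => Named a (subst_t j N M')
  end.

(* structural substitution [a <= N]: every subcommand [a]P becomes [a](P' N) *)
Fixpoint ssubst_t (a : nat) (N : term) (M : term) : term :=
  match M with
  | Var n => Var n
  | Lam M' => Lam (ssubst_t a (lift_t 0 N) M')
  | App M1 M2 => App (ssubst_t a N M1) (ssubst_t a N M2)
  | Mu C => Mu (ssubst_c (S a) (lift_n 0 N) C)
  end
with ssubst_c (a : nat) (N : term) (C : cmd) : cmd :=
  match C with
  | Named b P =>
      if b =? a then Named b (App (ssubst_t a N P) N)
      else Named b (ssubst_t a N P)
  end.

(* ---------- Reduction (compatible closure of beta and mu; no renaming) ---------- *)
Inductive step : term -> term -> Prop :=
| step_beta : forall M N, step (App (Lam M) N) (subst_t 0 N M)
| step_mu : forall C N, step (App (Mu C) N) (Mu (ssubst_c 0 (lift_n 0 N) C))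
| step_lam : forall M M', step M M' -> step (Lam M) (Lam M')
| step_appl : forall M M' N, step M M' -> step (App M N) (App M' N)
| step_appr : forall M N N', step N N' -> step (App M N) (App M N')
| step_mub : forall C C', step_c C C' -> step (Mu C) (Mu C')
with step_c : cmd -> cmd -> Prop :=
| step_named : forall a M M', step M M' -> step_c (Named a M) (Named a M').

Definition SN (M : term) : Prop :=
  ~ exists f : nat -> term, f 0 = M /\ forall n, step (f n) (f (S n)).

(* dtype: delta ::= kappa -> phi | delta /\ delta
   ktype: kappa ::= omega | delta x kappa | kappa /\ kappa *)
Inductive dtype : Type :=
| Arr  : ktype -> dtype
| DAnd : dtype -> dtype -> dtype
with ktype : Type :=
| Omega : ktype
| Times : dtype -> ktype -> ktype
| KAnd  : ktype -> ktype -> ktype.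

Inductive dle : dtype -> dtype -> Prop :=
| dle_refl : forall d, dle d d
| dle_trans : forall d1 d2 d3, dle d1 d2 -> dle d2 d3 -> dle d1 d3
| dle_andl : forall d1 d2, dle (DAnd d1 d2) d1
| dle_andr : forall d1 d2, dle (DAnd d1 d2) d2
| dle_glb : forall d d1 d2, dle d d1 -> dle d d2 -> dle d (DAnd d1 d2)
| dle_arr : forall k1 k2, kle k2 k1 -> dle (Arr k1) (Arr k2)
with kle : ktype -> ktype -> Prop :=
| kle_refl : forall k, kle k k
| kle_trans : forall k1 k2 k3, kle k1 k2 -> kle k2 k3 -> kle k1 k3
| kle_andl : forall k1 k2, kle (KAnd k1 k2) k1
| kle_andr : forall k1 k2, kle (KAnd k1 k2) k2
| kle_glb : forall k k1 k2, kle k k1 -> kle k k2 -> kle k (KAnd k1 k2)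
| kle_omega : forall k, kle k Omega
| kle_times_and : forall d1 k1 d2 k2,
    kle (KAnd (Times d1 k1) (Times d2 k2)) (Times (DAnd d1 d2) (KAnd k1 k2))
| kle_times : forall d1 d2 k1 k2, dle d1 d2 -> kle k1 k2 ->
    kle (Times d1 k1) (Times d2 k2).

Definition basis := nat -> option dtype.
Definition ncontext := nat -> option ktype.

Definition finite_basis (G : basis) : Prop :=
  exists b, forall n, b <= n -> G n = None.
Definition finite_ncontext (D : ncontext) : Prop :=
  exists b, forall n, b <= n -> D n = None.

Definition nlookup (D : ncontext) (a : nat) : ktype :=
  match D a with Some k => k | None => Omega end.

Definition bcons (d : dtype) (G : basis) : basis :=
  fun n => match n with 0 => Some d | S m => G m end.
Definition ncons (k : ktype) (D : ncontext) : ncontext :=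
  fun n => match n with 0 => Some k | S m => D m end.

Inductive typR : basis -> ncontext -> term -> dtype -> Prop :=
| tR_ax : forall G D x d, G x = Some d -> typR G D (Var x) d
| tR_abs : forall G D M d k,
    typR (bcons d G) D M (Arr k) -> typR G D (Lam M) (Arr (Times d k))
| tR_app : forall G D M N d k,
    typR G D M (Arr (Times d k)) -> typR G D N d -> typR G D (App M N) (Arr k)
| tR_mu : forall G D C k k',
    typRc G (ncons k D) C (Times (Arr k') k') -> typR G D (Mu C) (Arr k)
| tR_and : forall G D M d1 d2,
    typR G D M d1 -> typR G D M d2 -> typR G D M (DAnd d1 d2)
| tR_le : forall G D M d1 d2, typR G D M d1 -> dle d1 d2 -> typR G D M d2
with typRc : basis -> ncontext -> cmd -> ktype -> Prop :=
| tRc_cmd : forall G D a M d,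
    typR G D M d -> typRc G D (Named a M) (Times d (nlookup D a))
| tRc_and : forall G D C k1 k2,
    typRc G D C k1 -> typRc G D C k2 -> typRc G D C (KAnd k1 k2)
| tRc_le : forall G D C k1 k2, typRc G D C k1 -> kle k1 k2 -> typRc G D C k2.

(* Main.v *)
Require Import Defs.
From Stdlib Require Import Arith List Lia FunctionalExtensionality Classical ClassicalEpsilon.
Import ListNotations.

Scheme typR_mut := Induction for typR Sort Prop
with typRc_mut := Induction for typRc Sort Prop.
Scheme term_mut := Induction for term Sort Prop
with cmd_mut := Induction for cmd Sort Prop.
Combined Scheme term_cmd_mut from term_mut, cmd_mut.

Fixpoint atoms (d : dtype) : list ktype :=
  match d with Arr k => [k] | DAnd a b => atoms a ++ atoms b end.

Lemma dle_atoms : forall d1 d2, dle d1 d2 -> forall k, In k (atoms d2) ->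
  exists k', In k' (atoms d1) /\ kle k k'.
Proof.
  induction 1; simpl; intros k Hk.
  - exists k; split; auto; constructor.
  - destruct (IHdle2 k Hk) as [k' [H1 H2]]. destruct (IHdle1 k' H1) as [k'' [H3 H4]].
    exists k''; split; auto. eapply kle_trans; eauto.
  - exists k; split; [apply in_or_app; auto | constructor].
  - exists k; split; [apply in_or_app; auto | constructor].
  - apply in_app_or in Hk; destruct Hk; auto.
  - destruct Hk as [<-|[]]. exists k1; split; simpl; auto.
Qed.

Lemma atom_le : forall d k, In k (atoms d) -> dle d (Arr k).
Proof.
  induction d; simpl; intros k0 H.
  - destruct H as [<-|[]]; constructor.
  - apply in_app_or in H; destruct H.
    + eapply dle_trans; [apply dle_andl|auto].
    + eapply dle_trans; [apply dle_andr|auto].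
Qed.

Lemma atoms_ex : forall d, exists k, In k (atoms d).
Proof.
  induction d; simpl. exists k; auto.
  destruct IHd1 as [k H]; exists k; apply in_or_app; auto.
Qed.

Lemma dle_arr_inv : forall k1 k2, dle (Arr k1) (Arr k2) -> kle k2 k1.
Proof.
  intros. destruct (dle_atoms _ _ H k2) as [k' [[<-|[]] H2]]; simpl; auto.
Qed.

Lemma dand_arr : forall d1 d2 k, dle (DAnd d1 d2) (Arr k) -> dle d1 (Arr k) \/ dle d2 (Arr k).
Proof.
  intros. destruct (dle_atoms _ _ H k) as [k' [H1 H2]]; simpl; auto.
  simpl in H1; apply in_app_or in H1; destruct H1; [left|right];
  (eapply dle_trans; [apply atom_le; eauto| apply dle_arr; auto]).
Qed.

Fixpoint tm (k : ktype) : option (dtype * ktype) :=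
  match k with
  | Omega => None
  | Times d e => Some (d, e)
  | KAnd a b => match tm a, tm b with
                | Some (d1, e1), Some (d2, e2) => Some (DAnd d1 d2, KAnd e1 e2)
                | Some p, None => Some p
                | None, o => o end
  end.

Lemma kle_tm : forall k1 k2, kle k1 k2 -> forall d2 e2, tm k2 = Some (d2, e2) ->
  exists d1 e1, tm k1 = Some (d1, e1) /\ dle d1 d2 /\ kle e1 e2.
Proof.
  induction 1; intros dd ee Ht.
  - exists dd, ee; repeat split; auto; constructor.
  - destruct (IHkle2 _ _ Ht) as [d1 [e1 [H1 [H2 H3]]]].
    destruct (IHkle1 _ _ H1) as [d0 [e0 [H4 [H5 H6]]]].
    exists d0, e0; repeat split; auto; [eapply dle_trans|eapply kle_trans]; eauto.
  - simpl. rewrite Ht. destruct (tm k2) as [[d' e']|].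
    + do 2 eexists; repeat split; [apply dle_andl|apply kle_andl].
    + do 2 eexists; repeat split; constructor.
  - simpl. rewrite Ht. destruct (tm k1) as [[d' e']|].
    + do 2 eexists; repeat split; [apply dle_andr|apply kle_andr].
    + do 2 eexists; repeat split; constructor.
  - simpl in Ht. destruct (tm k1) as [[d1 e1]|] eqn:E1; destruct (tm k2) as [[d2 e2]|] eqn:E2.
    + inversion Ht; subst.
      destruct (IHkle1 _ _ eq_refl) as [x [y [Hx [Hx1 Hx2]]]].
      destruct (IHkle2 _ _ eq_refl) as [x' [y' [Hx' [Hx1' Hx2']]]].
      rewrite Hx in Hx'; inversion Hx'; subst.
      exists x', y'; split; [exact Hx| split; [apply dle_glb|apply kle_glb]; auto].
    + inversion Ht; subst. apply IHkle1; auto.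
    + apply IHkle2; auto.
    + discriminate.
  - discriminate.
  - simpl in Ht |- *. inversion Ht; subst. do 2 eexists; repeat split; constructor.
  - simpl in Ht. inversion Ht; subst. do 2 eexists; repeat split; eauto.
Qed.

Lemma kle_times_inv : forall a b c e, kle (Times a b) (Times c e) -> dle a c /\ kle b e.
Proof.
  intros. destruct (kle_tm _ _ H c e eq_refl) as [d1 [e1 [H1 [H2 H3]]]].
  simpl in H1; inversion H1; subst; auto.
Qed.
Definition Gle (G' G : basis) : Prop :=
  forall x a, G x = Some a -> exists a', G' x = Some a' /\ dle a' a.
Definition Dle (D' D : ncontext) : Prop :=
  forall a, kle (nlookup D' a) (nlookup D a).

Lemma Gle_bcons : forall d G' G, Gle G' G -> Gle (bcons d G') (bcons d G).
Proof.
  intros d G' G H [|x] a Hx; simpl in *.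
  - inversion Hx; subst; exists a; split; auto; constructor.
  - auto.
Qed.

Lemma Dle_ncons : forall k D' D, Dle D' D -> Dle (ncons k D') (ncons k D).
Proof.
  intros k D' D H [|a]; unfold nlookup; simpl.
  - constructor.
  - apply H.
Qed.

Lemma strengthen : forall G D T d, typR G D T d ->
  forall G' D', Gle G' G -> Dle D' D -> typR G' D' T d.
Proof.
  apply (typR_mut
    (fun G D T d _ => forall G' D', Gle G' G -> Dle D' D -> typR G' D' T d)
    (fun G D C k _ => forall G' D', Gle G' G -> Dle D' D -> typRc G' D' C k));
  intros; eauto using typR, typRc, Gle_bcons, Dle_ncons.
  - destruct (H _ _ e) as [a' [H1 H2]]. eapply tR_le; [apply tR_ax; eauto| auto].
  - eapply tRc_le. apply tRc_cmd. eauto. apply kle_times; [constructor| apply H1].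
Qed.

Lemma strengthen_c : forall G D C k, typRc G D C k ->
  forall G' D', Gle G' G -> Dle D' D -> typRc G' D' C k.
Proof.
  apply (typRc_mut
    (fun G D T d _ => forall G' D', Gle G' G -> Dle D' D -> typR G' D' T d)
    (fun G D C k _ => forall G' D', Gle G' G -> Dle D' D -> typRc G' D' C k));
  intros; eauto using typR, typRc, Gle_bcons, Dle_ncons.
  - destruct (H _ _ e) as [a' [H1 H2]]. eapply tR_le; [apply tR_ax; eauto| auto].
  - eapply tRc_le. apply tRc_cmd. eauto. apply kle_times; [constructor| apply H1].
Qed.

Lemma Gle_refl : forall G, Gle G G.
Proof. intros G x a H; exists a; split; auto; constructor. Qed.
Lemma Dle_refl : forall D, Dle D D.
Proof. intros D a; constructor. Qed.

Ltac solve_if := match goal with H: context[if ?b then _ else _] |- _ => destruct b; discriminate end.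

Definition shift (c n : nat) : nat := if c <=? n then S n else n.

Lemma shift_S : forall c m, shift (S c) (S m) = S (shift c m).
Proof. intros; unfold shift; simpl; destruct (c <=? m); auto. Qed.

Lemma lift_t_var : forall c n, lift_t c (Var n) = Var (shift c n).
Proof. intros; unfold shift; simpl; destruct (c <=? n); auto. Qed.

Lemma lift_t_fwd : forall G D T d, typR G D T d ->
  forall c G', (forall n, G' (shift c n) = G n) -> typR G' D (lift_t c T) d.
Proof.
  apply (typR_mut
    (fun G D T d _ => forall c G', (forall n, G' (shift c n) = G n) -> typR G' D (lift_t c T) d)
    (fun G D C k _ => forall c G', (forall n, G' (shift c n) = G n) -> typRc G' D (lift_tc c C) k));
  intros; simpl; eauto using typR, typRc.
  - pose proof (H x) as Hx; unfold shift in Hx; destruct (c <=? x); apply tR_ax; rewrite Hx; auto.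
  - apply tR_abs. apply H. intros [|m]; simpl; auto.
    rewrite shift_S; simpl; auto.
Qed.

Lemma lift_t_bwd : forall G' D T d, typR G' D T d ->
  forall c G M, T = lift_t c M -> (forall n, G' (shift c n) = G n) -> typR G D M d.
Proof.
  apply (typR_mut
    (fun G' D T d _ => forall c G M, T = lift_t c M -> (forall n, G' (shift c n) = G n) -> typR G D M d)
    (fun G' D C k _ => forall c G M, C = lift_tc c M -> (forall n, G' (shift c n) = G n) -> typRc G D M k));
  intros.
  - destruct M; simpl in H; try solve_if; try discriminate.
    pose proof (H0 n) as Hn; unfold shift in Hn.
    destruct (c <=? n); inversion H; subst; apply tR_ax; rewrite <- Hn; auto.
  - destruct M0; simpl in H0; try solve_if; try discriminate.
    inversion H0; subst. apply tR_abs. eapply H; eauto.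
    intros [|m]; simpl; auto. rewrite shift_S; simpl; auto.
  - destruct M0; simpl in H1; try solve_if; try discriminate.
    inversion H1; subst. eapply tR_app; eauto.
  - destruct M; simpl in H0; try solve_if; try discriminate.
    inversion H0; subst. eapply tR_mu; eauto.
  - eapply tR_and; eauto.
  - eapply tR_le; eauto.
  - destruct M0; simpl in H0; inversion H0; subst. apply tRc_cmd; eauto.
  - eapply tRc_and; eauto.
  - eapply tRc_le; eauto.
Qed.

Lemma lift_t0_fwd : forall G D N d e, typR G D N d -> typR (bcons e G) D (lift_t 0 N) d.
Proof. intros; eapply lift_t_fwd; eauto. Qed.
Lemma lift_t0_bwd : forall G D N d e, typR (bcons e G) D (lift_t 0 N) d -> typR G D N d.
Proof. intros; eapply lift_t_bwd; eauto. Qed.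

Lemma lift_n_fwd : forall G D T d, typR G D T d ->
  forall c D', (forall n, D' (shift c n) = D n) -> typR G D' (lift_n c T) d.
Proof.
  apply (typR_mut
    (fun G D T d _ => forall c D', (forall n, D' (shift c n) = D n) -> typR G D' (lift_n c T) d)
    (fun G D C k _ => forall c D', (forall n, D' (shift c n) = D n) -> typRc G D' (lift_nc c C) k));
  intros; simpl; eauto using typR, typRc.
  - eapply tR_mu. apply H. intros [|m]; simpl; auto.
    rewrite shift_S; simpl; auto.
  - replace (nlookup D a) with (nlookup D' (if c <=? a then S a else a)).
    apply tRc_cmd; auto. unfold nlookup. rewrite <- H0. reflexivity.
Qed.

Lemma lift_n_bwd : forall G D' T d, typR G D' T d ->
  forall c D M, T = lift_n c M -> (forall n, D' (shift c n) = D n) -> typR G D M d.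
Proof.
  apply (typR_mut
    (fun G D' T d _ => forall c D M, T = lift_n c M -> (forall n, D' (shift c n) = D n) -> typR G D M d)
    (fun G D' C k _ => forall c D M, C = lift_nc c M -> (forall n, D' (shift c n) = D n) -> typRc G D M k));
  intros.
  - destruct M; simpl in H; try discriminate. inversion H; subst. apply tR_ax; auto.
  - destruct M0; simpl in H0; try discriminate.
    inversion H0; subst. apply tR_abs. eapply H; eauto.
  - destruct M0; simpl in H1; try discriminate.
    inversion H1; subst. eapply tR_app; eauto.
  - destruct M; simpl in H0; try discriminate.
    inversion H0; subst. eapply tR_mu. eapply H; eauto.
    intros [|m]; simpl; auto. rewrite shift_S; simpl; auto.
  - eapply tR_and; eauto.
  - eapply tR_le; eauto.
  - destruct M0; simpl in H0; inversion H0; subst.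
    replace (nlookup D (if c <=? n then S n else n)) with (nlookup D0 n).
    apply tRc_cmd; eauto. unfold nlookup. rewrite <- H1. reflexivity.
  - eapply tRc_and; eauto.
  - eapply tRc_le; eauto.
Qed.

Lemma lift_n0_fwd : forall G D N d k, typR G D N d -> typR G (ncons k D) (lift_n 0 N) d.
Proof. intros; eapply lift_n_fwd; eauto. Qed.
Lemma lift_n0_bwd : forall G D N d k, typR G (ncons k D) (lift_n 0 N) d -> typR G D N d.
Proof. intros; eapply lift_n_bwd; eauto. Qed.
Lemma gen_var : forall G D T d, typR G D T d -> forall x, T = Var x ->
  exists a, G x = Some a /\ dle a d.
Proof.
  induction 1; intros y Hy; try discriminate.
  - inversion Hy; subst. exists d; split; auto; constructor.
  - destruct (IHtypR1 y Hy) as [a [H1 H2]]. destruct (IHtypR2 y Hy) as [b [H3 H4]].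
    rewrite H1 in H3; inversion H3; subst. exists b; split; auto. apply dle_glb; auto.
  - destruct (IHtypR y Hy) as [a [H1 H2]]. exists a; split; auto. eapply dle_trans; eauto.
Qed.

Lemma var_anyD : forall G D x d D', typR G D (Var x) d -> typR G D' (Var x) d.
Proof.
  intros. destruct (gen_var _ _ _ _ H x eq_refl) as [a [H1 H2]].
  eapply tR_le; [apply tR_ax; eauto| auto].
Qed.

Lemma gen_lam : forall G D T d, typR G D T d -> forall M, T = Lam M ->
  forall k, dle d (Arr k) -> exists d1 k1, typR (bcons d1 G) D M (Arr k1) /\ kle k (Times d1 k1).
Proof.
  induction 1; intros M0 HT k0 Hk; try discriminate.
  - inversion HT; subst. exists d, k; split; auto. apply dle_arr_inv; auto.
  - destruct (dand_arr _ _ _ Hk); eauto.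
  - eapply IHtypR; eauto. eapply dle_trans; eauto.
Qed.

Lemma gen_app : forall G D T d, typR G D T d -> forall Y Z, T = App Y Z ->
  forall k, dle d (Arr k) -> exists d1, typR G D Y (Arr (Times d1 k)) /\ typR G D Z d1.
Proof.
  induction 1; intros Y Z HT k0 Hk; try discriminate.
  - inversion HT; subst. exists d; split; auto.
    eapply tR_le; eauto. apply dle_arr. apply kle_times; [constructor|].
    apply dle_arr_inv; auto.
  - destruct (dand_arr _ _ _ Hk); eauto.
  - eapply IHtypR; eauto. eapply dle_trans; eauto.
Qed.

Lemma gen_mu : forall G D T d, typR G D T d -> forall C, T = Mu C ->
  forall k, dle d (Arr k) -> exists k', typRc G (ncons k D) C (Times (Arr k') k').
Proof.
  induction 1; intros C0 HT k0 Hk; try discriminate.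
  - inversion HT; subst. exists k'.
    pose proof (dle_arr_inv _ _ Hk) as Hk'.
    eapply strengthen_c; eauto. apply Gle_refl.
    intros [|a]; unfold nlookup; simpl; auto. constructor.
  - destruct (dand_arr _ _ _ Hk); eauto.
  - eapply IHtypR; eauto. eapply dle_trans; eauto.
Qed.
Lemma gen_cmd : forall G D C k, typRc G D C k -> forall a P, C = Named a P ->
  exists dP, typR G D P dP /\ kle (Times dP (nlookup D a)) k.
Proof.
  induction 1; intros b P HC.
  - inversion HC; subst. exists d; split; auto; constructor.
  - destruct (IHtypRc1 _ _ HC) as [d1 [H1 H2]]. destruct (IHtypRc2 _ _ HC) as [d2 [H3 H4]].
    exists (DAnd d1 d2); split; [apply tR_and; auto|].
    apply kle_glb; eapply kle_trans; eauto; apply kle_times; constructor.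
  - destruct (IHtypRc _ _ HC) as [d1 [H1 H2]]. exists d1; split; auto. eapply kle_trans; eauto.
Qed.

Lemma arr_suff : forall G D Y d, (forall k, dle d (Arr k) -> typR G D Y (Arr k)) -> typR G D Y d.
Proof.
  intros G D Y d; induction d; intros H.
  - apply H; constructor.
  - apply tR_and; [apply IHd1|apply IHd2]; intros k Hk; apply H;
    (eapply dle_trans; [|exact Hk]); constructor.
Qed.

Lemma reduce_arr : forall G D T N (Q : dtype -> dtype -> Prop),
  (forall d1 d2 e, Q d1 e -> Q (DAnd d1 d2) e) ->
  (forall d1 d2 e, Q d2 e -> Q (DAnd d1 d2) e) ->
  (forall d e1 e2, Q d e1 -> Q d e2 -> Q d (DAnd e1 e2)) ->
  (forall k, typR G D T (Arr k) -> exists d, typR G D N d /\ Q d (Arr k)) ->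
  forall e, typR G D T e -> exists d, typR G D N d /\ Q d e.
Proof.
  intros G D T N Q H1 H2 H3 H4 e; induction e; intros He; auto.
  destruct IHe1 as [d1 [A1 B1]]. eapply tR_le; eauto; constructor.
  destruct IHe2 as [d2 [A2 B2]]. eapply tR_le; eauto; constructor.
  exists (DAnd d1 d2); split; [apply tR_and; auto| apply H3; eauto].
Qed.

Lemma Gle_and_l : forall d1 d2 (f : dtype -> basis),
  (forall a b, dle a b -> Gle (f a) (f b)) -> Gle (f (DAnd d1 d2)) (f d1).
Proof. intros; apply H; constructor. Qed.

Definition ins (j : nat) (d : dtype) (G : basis) : basis :=
  fun n => if n =? j then Some d else if j <? n then G (pred n) else G n.

Lemma ins_mono : forall j G a b, dle a b -> Gle (ins j a G) (ins j b G).
Proof.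
  intros j G a b H x c Hx; unfold ins in *.
  destruct (x =? j). inversion Hx; subst; exists a; auto.
  exists c; split; auto; constructor.
Qed.

Lemma ins_bcons : forall j d d1 G, ins (S j) d (bcons d1 G) = bcons d1 (ins j d G).
Proof.
  intros; apply functional_extensionality; intros n; destruct n as [|m]; unfold ins, bcons.
  - reflexivity.
  - change (S m =? S j) with (m =? j). change (S j <? S m) with (j <? m).
    destruct (m =? j); auto.
    destruct (j <? m) eqn:E2; auto.
    destruct m; [apply Nat.ltb_lt in E2; lia| reflexivity].
Qed.

Lemma ins_0 : forall d G, ins 0 d G = bcons d G.
Proof. intros; apply functional_extensionality; intros [|m]; unfold ins; simpl; auto. Qed.

Definition updD (D : ncontext) (a : nat) (k : ktype) : ncontext :=
  fun b => if b =? a then Some k else D b.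

Lemma updD_mono : forall D a k1 k2, kle k1 k2 -> Dle (updD D a k1) (updD D a k2).
Proof.
  intros D a k1 k2 H b; unfold nlookup, updD. destruct (b =? a); auto; constructor.
Qed.

Lemma updD_ncons : forall D a k X, updD (ncons k D) (S a) X = ncons k (updD D a X).
Proof. intros; apply functional_extensionality; intros [|m]; unfold updD; simpl; auto. Qed.

Lemma updD_0 : forall D k X, updD (ncons k D) 0 X = ncons X D.
Proof. intros; apply functional_extensionality; intros [|m]; unfold updD; simpl; auto. Qed.

Lemma sub_inv :
  (forall M G D j N e, typR G D (subst_t j N M) e -> (exists d0, typR G D N d0) ->
     exists d, typR G D N d /\ typR (ins j d G) D M e) /\
  (forall C G D j N k, typRc G D (subst_c j N C) k -> (exists d0, typR G D N d0) ->
     exists d, typR G D N d /\ typRc (ins j d G) D C k).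
Proof.
  apply (term_cmd_mut
    (fun M => forall G D j N e, typR G D (subst_t j N M) e -> (exists d0, typR G D N d0) ->
     exists d, typR G D N d /\ typR (ins j d G) D M e)
    (fun C => forall G D j N k, typRc G D (subst_c j N C) k -> (exists d0, typR G D N d0) ->
     exists d, typR G D N d /\ typRc (ins j d G) D C k)).
  -
    intros n G D j N e H [d0 H0]. simpl in H.
    destruct (n =? j) eqn:E.
    + exists e; split; auto. apply tR_ax. unfold ins; rewrite E; auto.
    + exists d0; split; auto.
      destruct (j <? n) eqn:E2;
      destruct (gen_var _ _ _ _ H _ eq_refl) as [a [Ha Ha2]];
      (eapply tR_le; [apply tR_ax|exact Ha2]); unfold ins; rewrite E, E2; auto.
  -
    intros M IH G D j N e H HN.
    apply (reduce_arr G D (subst_t j N (Lam M)) N (fun d e => typR (ins j d G) D (Lam M) e)); auto.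
    + intros; eapply strengthen; eauto using ins_mono, Dle_refl, dle_andl.
    + intros; eapply strengthen; eauto using ins_mono, Dle_refl, dle_andr.
    + intros; apply tR_and; auto.
    + intros k Hk. simpl in Hk.
      destruct (gen_lam _ _ _ _ Hk _ eq_refl k (dle_refl _)) as [d1 [k1 [H1 H2]]].
      destruct HN as [d0 HN].
      destruct (IH _ _ _ _ _ H1) as [d [H3 H4]].
      exists d0; apply lift_t0_fwd; auto.
      exists d; split. eapply lift_t0_bwd; eauto.
      eapply tR_le. apply tR_abs. rewrite <- ins_bcons. exact H4.
      apply dle_arr; auto.
  -
    intros M1 IH1 M2 IH2 G D j N e H HN.
    apply (reduce_arr G D (subst_t j N (App M1 M2)) N (fun d e => typR (ins j d G) D (App M1 M2) e)); auto.
    + intros; eapply strengthen; eauto using ins_mono, Dle_refl, dle_andl.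
    + intros; eapply strengthen; eauto using ins_mono, Dle_refl, dle_andr.
    + intros; apply tR_and; auto.
    + intros k Hk. simpl in Hk.
      destruct (gen_app _ _ _ _ Hk _ _ eq_refl k (dle_refl _)) as [d1 [H1 H2]].
      destruct (IH1 _ _ _ _ _ H1 HN) as [e1 [A1 B1]].
      destruct (IH2 _ _ _ _ _ H2 HN) as [e2 [A2 B2]].
      exists (DAnd e1 e2); split. apply tR_and; auto.
      eapply tR_app.
      eapply strengthen; eauto using ins_mono, Dle_refl, dle_andl.
      eapply strengthen; eauto using ins_mono, Dle_refl, dle_andr.
  -
    intros C IH G D j N e H HN.
    apply (reduce_arr G D (subst_t j N (Mu C)) N (fun d e => typR (ins j d G) D (Mu C) e)); auto.
    + intros; eapply strengthen; eauto using ins_mono, Dle_refl, dle_andl.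
    + intros; eapply strengthen; eauto using ins_mono, Dle_refl, dle_andr.
    + intros; apply tR_and; auto.
    + intros k Hk. simpl in Hk.
      destruct (gen_mu _ _ _ _ Hk _ eq_refl k (dle_refl _)) as [k' H1].
      destruct HN as [d0 HN].
      destruct (IH _ _ _ _ _ H1) as [d [H3 H4]].
      exists d0; apply lift_n0_fwd; auto.
      exists d; split. eapply lift_n0_bwd; eauto.
      eapply tR_mu; eauto.
  -
    intros b P IH G D j N k H HN. simpl in H.
    destruct (gen_cmd _ _ _ _ H _ _ eq_refl) as [dP [H1 H2]].
    destruct (IH _ _ _ _ _ H1 HN) as [d [H3 H4]].
    exists d; split; auto. eapply tRc_le; [apply tRc_cmd; eauto| auto].
Qed.
Lemma nlookup_upd_eq : forall D a X, nlookup (updD D a X) a = X.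
Proof. intros; unfold nlookup, updD; rewrite Nat.eqb_refl; auto. Qed.
Lemma nlookup_upd_neq : forall D a b X, (b =? a) = false -> nlookup (updD D a X) b = nlookup D b.
Proof. intros; unfold nlookup, updD; rewrite H; auto. Qed.

Lemma upd_and_l : forall D a d1 d2 K, Dle (updD D a (Times (DAnd d1 d2) K)) (updD D a (Times d1 K)).
Proof. intros; apply updD_mono; apply kle_times; constructor. Qed.
Lemma upd_and_r : forall D a d1 d2 K, Dle (updD D a (Times (DAnd d1 d2) K)) (updD D a (Times d2 K)).
Proof. intros; apply updD_mono; apply kle_times; constructor. Qed.

Lemma ssub_inv :
  (forall M G D a N e, typR G D (ssubst_t a N M) e -> (exists d0, typR G D N d0) ->
     exists d, typR G D N d /\ typR G (updD D a (Times d (nlookup D a))) M e) /\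
  (forall C G D a N k', typRc G D (ssubst_c a N C) (Times (Arr k') k') -> (exists d0, typR G D N d0) ->
     exists d k3, typR G D N d /\ typRc G (updD D a (Times d (nlookup D a))) C (Times (Arr k3) k3)).
Proof.
  apply (term_cmd_mut
    (fun M => forall G D a N e, typR G D (ssubst_t a N M) e -> (exists d0, typR G D N d0) ->
     exists d, typR G D N d /\ typR G (updD D a (Times d (nlookup D a))) M e)
    (fun C => forall G D a N k', typRc G D (ssubst_c a N C) (Times (Arr k') k') -> (exists d0, typR G D N d0) ->
     exists d k3, typR G D N d /\ typRc G (updD D a (Times d (nlookup D a))) C (Times (Arr k3) k3))).
  -
    intros n G D a N e H [d0 H0]. simpl in H.
    exists d0; split; auto. eapply var_anyD; eauto.
  -
    intros M IH G D a N e H HN.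
    apply (reduce_arr G D (ssubst_t a N (Lam M)) N (fun d e => typR G (updD D a (Times d (nlookup D a))) (Lam M) e)); auto.
    + intros; eapply strengthen; eauto using Gle_refl, upd_and_l.
    + intros; eapply strengthen; eauto using Gle_refl, upd_and_r.
    + intros; apply tR_and; auto.
    + intros k Hk. simpl in Hk.
      destruct (gen_lam _ _ _ _ Hk _ eq_refl k (dle_refl _)) as [d1 [k1 [H1 H2]]].
      destruct HN as [d0 HN].
      destruct (IH _ _ _ _ _ H1) as [d [H3 H4]].
      exists d0; apply lift_t0_fwd; auto.
      exists d; split. eapply lift_t0_bwd; eauto.
      eapply tR_le. apply tR_abs. exact H4.
      apply dle_arr; auto.
  -
    intros M1 IH1 M2 IH2 G D a N e H HN.
    apply (reduce_arr G D (ssubst_t a N (App M1 M2)) N (fun d e => typR G (updD D a (Times d (nlookup D a))) (App M1 M2) e)); auto.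
    + intros; eapply strengthen; eauto using Gle_refl, upd_and_l.
    + intros; eapply strengthen; eauto using Gle_refl, upd_and_r.
    + intros; apply tR_and; auto.
    + intros k Hk. simpl in Hk.
      destruct (gen_app _ _ _ _ Hk _ _ eq_refl k (dle_refl _)) as [d1 [H1 H2]].
      destruct (IH1 _ _ _ _ _ H1 HN) as [e1 [A1 B1]].
      destruct (IH2 _ _ _ _ _ H2 HN) as [e2 [A2 B2]].
      exists (DAnd e1 e2); split. apply tR_and; auto.
      eapply tR_app.
      eapply strengthen; eauto using Gle_refl, upd_and_l.
      eapply strengthen; eauto using Gle_refl, upd_and_r.
  -
    intros C IH G D a N e H HN.
    apply (reduce_arr G D (ssubst_t a N (Mu C)) N (fun d e => typR G (updD D a (Times d (nlookup D a))) (Mu C) e)); auto.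
    + intros; eapply strengthen; eauto using Gle_refl, upd_and_l.
    + intros; eapply strengthen; eauto using Gle_refl, upd_and_r.
    + intros; apply tR_and; auto.
    + intros k Hk. simpl in Hk.
      destruct (gen_mu _ _ _ _ Hk _ eq_refl k (dle_refl _)) as [k' H1].
      destruct HN as [d0 HN].
      destruct (IH _ _ _ _ _ H1) as [d [k3 [H3 H4]]].
      exists d0; apply lift_n0_fwd; auto.
      exists d; split. eapply lift_n0_bwd; eauto.
      rewrite updD_ncons in H4.
      eapply tR_mu; exact H4.
  -
    intros b P IH G D a N k' H HN. simpl in H.
    destruct (b =? a) eqn:E.
    + apply Nat.eqb_eq in E; subst b.
      destruct (gen_cmd _ _ _ _ H _ _ eq_refl) as [dX [H1 H2]].
      apply kle_times_inv in H2. destruct H2 as [H2 HK].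
      destruct (gen_app _ _ _ _ H1 _ _ eq_refl k' H2) as [d1 [H3 H4]].
      destruct (IH _ _ _ _ _ H3 HN) as [d2 [H5 H6]].
      exists (DAnd d1 d2), (Times (DAnd d1 d2) k'); split. apply tR_and; auto.
      eapply tRc_le. apply tRc_cmd.
      eapply strengthen; [exact H6| apply Gle_refl| apply upd_and_r].
      rewrite nlookup_upd_eq.
      apply kle_times. apply dle_arr. apply kle_times; constructor.
      apply kle_times; [constructor| exact HK].
    + destruct (gen_cmd _ _ _ _ H _ _ eq_refl) as [dX [H1 H2]].
      destruct (IH _ _ _ _ _ H1 HN) as [d [H3 H4]].
      exists d, k'; split; auto.
      eapply tRc_le. apply tRc_cmd. exact H4.
      rewrite nlookup_upd_neq; auto.
Qed.
Lemma beta_exp : forall G D Q d0 M, typR G D Q d0 ->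
  forall e, typR G D (subst_t 0 Q M) e -> typR G D (App (Lam M) Q) e.
Proof.
  intros G D Q d0 M HQ e He. apply arr_suff. intros k Hk.
  assert (H1 : typR G D (subst_t 0 Q M) (Arr k)) by (eapply tR_le; eauto).
  destruct (proj1 sub_inv _ _ _ _ _ _ H1 (ex_intro _ d0 HQ)) as [d [H2 H3]].
  rewrite ins_0 in H3. eapply tR_app; [apply tR_abs; exact H3| exact H2].
Qed.

Lemma mu_exp : forall G D Q d0 C, typR G D Q d0 ->
  forall e, typR G D (Mu (ssubst_c 0 (lift_n 0 Q) C)) e -> typR G D (App (Mu C) Q) e.
Proof.
  intros G D Q d0 C HQ e He. apply arr_suff. intros k Hk.
  destruct (gen_mu _ _ _ _ He _ eq_refl k Hk) as [k' H1].
  destruct (proj2 ssub_inv _ _ _ _ _ _ H1) as [d [k3 [H2 H3]]].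
  exists d0; apply lift_n0_fwd; auto.
  change (nlookup (ncons k D) 0) with k in H3. rewrite updD_0 in H3.
  eapply tR_app; [eapply tR_mu; exact H3| eapply lift_n0_bwd; exact H2].
Qed.

Lemma app_congr : forall G D X Y P, (forall e, typR G D X e -> typR G D Y e) ->
  forall e, typR G D (App X P) e -> typR G D (App Y P) e.
Proof.
  intros G D X Y P H e He. apply arr_suff; intros k Hk.
  destruct (gen_app _ _ _ _ He _ _ eq_refl k Hk) as [d1 [H1 H2]].
  eapply tR_app; eauto.
Qed.

Definition apps (X : term) (Ps : list term) : term := fold_left App Ps X.

Lemma apps_congr : forall G D Ps X Y, (forall e, typR G D X e -> typR G D Y e) ->
  forall e, typR G D (apps X Ps) e -> typR G D (apps Y Ps) e.
Proof.
  intros G D Ps; induction Ps as [|P Ps IH]; intros X Y H; simpl; auto.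
  apply IH. apply app_congr; auto.
Qed.

Lemma apps_snoc : forall Ps X P, apps X (Ps ++ [P]) = App (apps X Ps) P.
Proof. intros; unfold apps; rewrite fold_left_app; reflexivity. Qed.

Lemma step_apps : forall Ps X X', step X X' -> step (apps X Ps) (apps X' Ps).
Proof. induction Ps; intros; simpl; auto. apply IHPs. apply step_appl; auto. Qed.

Fixpoint chain (ds : list dtype) (k : ktype) : ktype :=
  match ds with [] => k | d :: ds' => Times d (chain ds' k) end.

Lemma apps_typ : forall G D Ps ds, Forall2 (typR G D) Ps ds ->
  forall X k, typR G D X (Arr (chain ds k)) -> typR G D (apps X Ps) (Arr k).
Proof.
  induction 1; intros X k HX; simpl in *; auto.
  apply IHForall2. eapply tR_app; eauto.
Qed.

Definition meetG (G1 G2 : basis) : basis := fun x =>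
  match G1 x, G2 x with
  | Some a, Some b => Some (DAnd a b)
  | Some a, None => Some a
  | None, o => o end.
Definition meetD (D1 D2 : ncontext) : ncontext := fun x =>
  match D1 x, D2 x with
  | Some a, Some b => Some (KAnd a b)
  | Some a, None => Some a
  | None, o => o end.

Lemma meetG_l : forall G1 G2, Gle (meetG G1 G2) G1.
Proof.
  intros G1 G2 x a H; unfold meetG; rewrite H; destruct (G2 x).
  exists (DAnd a d); split; auto; constructor. exists a; split; auto; constructor.
Qed.
Lemma meetG_r : forall G1 G2, Gle (meetG G1 G2) G2.
Proof.
  intros G1 G2 x a H; unfold meetG; rewrite H; destruct (G1 x).
  exists (DAnd d a); split; auto; constructor. exists a; split; auto; constructor.
Qed.
Lemma meetD_l : forall D1 D2, Dle (meetD D1 D2) D1.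
Proof.
  intros D1 D2 x; unfold nlookup, meetD; destruct (D1 x); destruct (D2 x); constructor.
Qed.
Lemma meetD_r : forall D1 D2, Dle (meetD D1 D2) D2.
Proof.
  intros D1 D2 x; unfold nlookup, meetD; destruct (D1 x); destruct (D2 x); constructor.
Qed.
Lemma meetG_fin : forall G1 G2, finite_basis G1 -> finite_basis G2 -> finite_basis (meetG G1 G2).
Proof.
  intros G1 G2 [b1 H1] [b2 H2]; exists (b1 + b2); intros n Hn; unfold meetG.
  rewrite H1, H2; auto; lia.
Qed.
Lemma meetD_fin : forall D1 D2, finite_ncontext D1 -> finite_ncontext D2 -> finite_ncontext (meetD D1 D2).
Proof.
  intros D1 D2 [b1 H1] [b2 H2]; exists (b1 + b2); intros n Hn; unfold meetD.
  rewrite H1, H2; auto; lia.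
Qed.

Definition typable (M : term) : Prop :=
  exists G D d, finite_basis G /\ finite_ncontext D /\ typR G D M d.
Lemma typ_lam : forall M, typable M -> typable (Lam M).
Proof.
  intros M [G [D [e [HG [HD H]]]]].
  destruct (atoms_ex e) as [k Hk]. apply atom_le in Hk.
  set (d := match G 0 with Some a => a | None => Arr Omega end).
  exists (fun n => G (S n)), D, (Arr (Times d k)); split; [|split]; auto.
  - destruct HG as [b Hb]; exists b; intros n Hn; apply Hb; lia.
  - apply tR_abs. eapply strengthen; [eapply tR_le; eauto| |apply Dle_refl].
    intros [|x] a Hx; simpl.
    + subst d; rewrite Hx; exists a; split; auto; constructor.
    + exists a; split; auto; constructor.
Qed.

Lemma typ_mu : forall b P, typable P -> typable (Mu (Named b P)).
Proof.
  intros b P [G [D [e [HG [HD H]]]]].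
  destruct (atoms_ex e) as [k' Hk]. apply atom_le in Hk.
  set (D2 := updD D b (KAnd k' (nlookup D b))).
  assert (HD2 : Dle D2 D).
  { intros a; subst D2; unfold nlookup at 1, updD. destruct (a =? b) eqn:E.
    apply Nat.eqb_eq in E; subst; apply kle_andr. unfold nlookup; constructor. }
  set (K := nlookup D2 0).
  exists G, (fun n => D2 (S n)), (Arr K); split; [|split]; auto.
  - destruct HD as [c Hc]; exists (b + c); intros n Hn; subst D2; unfold updD.
    destruct (S n =? b) eqn:E. apply Nat.eqb_eq in E; lia. apply Hc; lia.
  - eapply tR_mu. eapply strengthen_c.
    + eapply tRc_le. apply tRc_cmd. eapply strengthen; [eapply tR_le; eauto|apply Gle_refl|exact HD2].
      apply kle_times; [constructor|]. subst D2; rewrite nlookup_upd_eq; apply kle_andl.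
    + apply Gle_refl.
    + intros [|a]; unfold nlookup; simpl; subst K; constructor.
Qed.

Lemma common_ctx : forall Ps, (forall P, In P Ps -> typable P) ->
  exists G D ds, finite_basis G /\ finite_ncontext D /\ Forall2 (typR G D) Ps ds.
Proof.
  induction Ps as [|P Ps IH]; intros H.
  - exists (fun _ => None), (fun _ => None), []; repeat split; auto.
    exists 0; auto. exists 0; auto.
  - destruct IH as [G1 [D1 [ds [H1 [H2 H3]]]]]. intros; apply H; simpl; auto.
    destruct (H P) as [G2 [D2 [d [H4 [H5 H6]]]]]. simpl; auto.
    exists (meetG G1 G2), (meetD D1 D2), (d :: ds); split; [|split].
    apply meetG_fin; auto. apply meetD_fin; auto.
    constructor. eapply strengthen; eauto using meetG_r, meetD_r.
    eapply Forall2_impl; [|exact H3]. intros; eapply strengthen; eauto using meetG_l, meetD_l.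
Qed.

Lemma typ_var_apps : forall x Ps, (forall P, In P Ps -> typable P) -> typable (apps (Var x) Ps).
Proof.
  intros x Ps H. destruct (common_ctx Ps H) as [G [D [ds [H1 [H2 H3]]]]].
  set (t := Arr (chain ds Omega)).
  set (G' := fun y => if y =? x then Some (match G x with Some a => DAnd t a | None => t end) else G y).
  assert (HG : Gle G' G).
  { intros y a Hy; subst G'; simpl. destruct (y =? x) eqn:E.
    apply Nat.eqb_eq in E; subst. rewrite Hy. exists (DAnd t a); split; auto; constructor.
    exists a; split; auto; constructor. }
  exists G', D, (Arr Omega); split; [|split]; auto.
  - destruct H1 as [b Hb]; exists (b + S x); intros n Hn; subst G'; simpl.
    destruct (n =? x) eqn:E. apply Nat.eqb_eq in E; lia. apply Hb; lia.
  - eapply apps_typ.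
    eapply Forall2_impl; [|exact H3]. intros; eapply strengthen; eauto using Dle_refl.
    eapply tR_le. apply tR_ax. subst G'; simpl. rewrite Nat.eqb_refl. reflexivity.
    destruct (G x); [apply dle_andl| constructor].
Qed.

Lemma typ_beta : forall M Q Ps, typable (apps (subst_t 0 Q M) Ps) -> typable Q ->
  typable (apps (App (Lam M) Q) Ps).
Proof.
  intros M Q Ps [G1 [D1 [e [A1 [B1 C1]]]]] [G2 [D2 [d [A2 [B2 C2]]]]].
  exists (meetG G1 G2), (meetD D1 D2), e; split; [|split].
  apply meetG_fin; auto. apply meetD_fin; auto.
  eapply apps_congr; [| eapply strengthen; eauto using meetG_l, meetD_l].
  intros; eapply beta_exp; eauto. eapply strengthen; eauto using meetG_r, meetD_r.
Qed.

Lemma typ_mured : forall C Q Ps, typable (apps (Mu (ssubst_c 0 (lift_n 0 Q) C)) Ps) -> typable Q ->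
  typable (apps (App (Mu C) Q) Ps).
Proof.
  intros C Q Ps [G1 [D1 [e [A1 [B1 C1]]]]] [G2 [D2 [d [A2 [B2 C2]]]]].
  exists (meetG G1 G2), (meetD D1 D2), e; split; [|split].
  apply meetG_fin; auto. apply meetD_fin; auto.
  eapply apps_congr; [| eapply strengthen; eauto using meetG_l, meetD_l].
  intros; eapply mu_exp; eauto. eapply strengthen; eauto using meetG_r, meetD_r.
Qed.
Definition R (y x : term) : Prop := step x y.

Lemma SN_Acc : forall M, SN M -> Acc R M.
Proof.
  intros M H. apply NNPP; intro HA. apply H.
  assert (nxt : forall s : {x | ~ Acc R x}, {y : {x | ~ Acc R x} | step (proj1_sig s) (proj1_sig y)}).
  { intros [x Hx].
    assert (E : exists y, step x y /\ ~ Acc R y).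
    { apply NNPP; intro H'. apply Hx. constructor. intros y Hy. apply NNPP; intro.
      apply H'; eauto. }
    apply constructive_indefinite_description in E. destruct E as [y [H1 H2]].
    exists (exist _ y H2); simpl; auto. }
  set (s0 := exist (fun x => ~ Acc R x) M HA).
  exists (fun n => proj1_sig (Nat.iter n (fun s => proj1_sig (nxt s)) s0)).
  split; auto. intros n. simpl. apply (proj2_sig (nxt _)).
Qed.

Fixpoint size_t (M : term) : nat :=
  match M with
  | Var _ => 1
  | Lam M' => S (size_t M')
  | App a b => S (size_t a + size_t b)
  | Mu (Named _ P) => S (size_t P)
  end.

Inductive sub : term -> term -> Prop :=
| sub_refl : forall N, sub N N
| sub_lam : forall N M, sub N M -> sub N (Lam M)
| sub_appl : forall N M1 M2, sub N M1 -> sub N (App M1 M2)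
| sub_appr : forall N M1 M2, sub N M2 -> sub N (App M1 M2)
| sub_mu : forall N a M, sub N M -> sub N (Mu (Named a M)).

Lemma sub_trans : forall A B C, sub A B -> sub B C -> sub A C.
Proof. intros A B C H1 H2; induction H2; eauto using sub. Qed.

Lemma sub_step : forall N M, sub N M -> forall N', step N N' -> exists M', step M M' /\ sub N' M'.
Proof.
  induction 1; intros N' Hs.
  - exists N'; split; auto; constructor.
  - destruct (IHsub _ Hs) as [M' [H1 H2]]. exists (Lam M'); split; [constructor|]; eauto using sub.
  - destruct (IHsub _ Hs) as [M' [H1 H2]]. exists (App M' M2); split; [constructor|]; eauto using sub.
  - destruct (IHsub _ Hs) as [M' [H1 H2]]. exists (App M1 M'); split; [constructor|]; eauto using sub.
  - destruct (IHsub _ Hs) as [M' [H1 H2]]. exists (Mu (Named a M')); split; [do 2 constructor|]; eauto using sub.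
Qed.

Lemma sub_apps_head : forall Ps X Y, sub Y X -> sub Y (apps X Ps).
Proof. induction Ps; intros; simpl; auto. apply IHPs. apply sub_appl; auto. Qed.

Lemma sub_apps_arg : forall Ps X P, In P Ps -> sub P (apps X Ps).
Proof.
  induction Ps; intros X P H; simpl in *; destruct H; subst; auto.
  apply sub_apps_head. apply sub_appr; constructor.
Qed.

Lemma size_apps_head : forall Ps X n, n < size_t X -> n < size_t (apps X Ps).
Proof. induction Ps; intros; simpl; auto. apply IHPs. simpl; lia. Qed.

Lemma size_apps_arg : forall Ps X P, In P Ps -> size_t P < size_t (apps X Ps).
Proof.
  induction Ps; intros X P H; simpl in *; destruct H; subst; auto.
  apply size_apps_head. simpl; lia.
Qed.

Lemma decomp : forall N,
  (exists M', N = Lam M') \/ (exists b P, N = Mu (Named b P)) \/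
  (exists x Ps, N = apps (Var x) Ps) \/
  (exists M' Q Ps, N = apps (App (Lam M') Q) Ps) \/
  (exists C Q Ps, N = apps (App (Mu C) Q) Ps).
Proof.
  induction N.
  - right; right; left; exists n, []; auto.
  - left; eauto.
  - destruct IHN1 as [[M' ->]|[[b [P ->]]|[[x [Ps ->]]|[[M' [Q [Ps ->]]]|[C [Q [Ps ->]]]]]]].
    + right; right; right; left; exists M', N2, []; auto.
    + right; right; right; right; exists (Named b P), N2, []; auto.
    + right; right; left; exists x, (Ps ++ [N2]); rewrite apps_snoc; auto.
    + right; right; right; left; exists M', Q, (Ps ++ [N2]); rewrite apps_snoc; auto.
    + right; right; right; right; exists C, Q, (Ps ++ [N2]); rewrite apps_snoc; auto.
  - destruct c; right; left; eauto.
Qed.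

Lemma main : forall M, Acc R M -> forall N, sub N M -> typable N.
Proof.
  induction 1 as [M _ IH].
  assert (forall n N, size_t N < n -> sub N M -> typable N); [|eauto].
  induction n; intros N Hn Hs; [lia|].
  destruct (decomp N) as [[M' ->]|[[b [P ->]]|[[x [Ps ->]]|[[M' [Q [Ps ->]]]|[C [Q [Ps ->]]]]]]].
  - apply typ_lam. apply IHn. simpl in Hn; lia. eapply sub_trans; [|exact Hs]; eauto using sub.
  - apply typ_mu. apply IHn. simpl in Hn; lia. eapply sub_trans; [|exact Hs]; eauto using sub.
  - apply typ_var_apps. intros P HP. apply IHn.
    pose proof (size_apps_arg Ps (Var x) P HP); lia.
    eapply sub_trans; [|exact Hs]. apply sub_apps_arg; auto.
  - apply typ_beta.
    + destruct (sub_step _ _ Hs (apps (subst_t 0 Q M') Ps)) as [M2 [H1 H2]].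
      apply step_apps; constructor.
      eapply IH; eauto.
    + apply IHn. assert (size_t Q < size_t (apps (App (Lam M') Q) Ps)).
      apply size_apps_head; simpl; lia. lia.
      eapply sub_trans; [|exact Hs]. apply sub_apps_head. apply sub_appr; constructor.
  - apply typ_mured.
    + destruct (sub_step _ _ Hs (apps (Mu (ssubst_c 0 (lift_n 0 Q) C)) Ps)) as [M2 [H1 H2]].
      apply step_apps; constructor.
      eapply IH; eauto.
    + apply IHn. assert (size_t Q < size_t (apps (App (Mu C) Q) Ps)).
      apply size_apps_head; simpl; lia. lia.
      eapply sub_trans; [|exact Hs]. apply sub_apps_head. apply sub_appr; constructor.
Qed.

Theorem theorem6p21 :
  forall M : term, SN M ->
  exists (G : basis) (D : ncontext) (d : dtype),
    finite_basis G /\ finite_ncontext D /\ typR G D M d.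
Proof.
  intros M H. apply (main M (SN_Acc M H) M (sub_refl M)).
Qed.
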